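(* Let $D$ be a database, $\mathcal{A}$ an automaton and $s,t$ vertices of $D$. Let $P_{s,t}=\{w\in\llbracket\mathcal{A}\rrbracket_W(D): \mathrm{src}(w)=s,\ \mathrm{tgt}(w)=t\}$. Every walk of minimal length in $P_{s,t}$ belongs to $\llbracket\mathcal{A}\rrbracket_{SR}(D)$.
   Context: A database is $D=(\Sigma,V,E,\mathrm{src},\mathrm{tgt},\mathrm{lbl})$ with finite alphabet $\Sigma$, finite vertex set $V$, finite edge set $E$, $\mathrm{src},\mathrm{tgt}:E\to V$, $\mathrm{lbl}:E\to2^\Sigma$. A walk is $(n_0,e_0,\dots,e_{k-1},n_k)$ with $\mathrm{src}(e_i)=n_i$, $\mathrm{tgt}(e_i)=n_{i+1}$; its length is $k$. A walk is simple if it repeats no vertex. An automaton is $\mathcal{A}=(\Sigma,Q,\Delta,I,F)$ with $\Delta\subseteq Q\times\Sigma\times Q$. The run database $D\times\mathcal{A}$ has vertices $V\times Q$ and edges $(e,(q,a,q'))$ for $e\in E$, $(q,a,q')\in\Delta$, $a\in\mathrm{lbl}(e)$, from $(\mathrm{src}(e),q)$ to $(\mathrm{tgt}(e),q')$. A run is a walk of $D\times\mathcal{A}$ from $V\times I$ to $V\times F$; $\pi_D$ is the projection to $D$. Walk semantics: $\llbracket\mathcal{A}\rrbracket_W(D)$ is the bag of $\pi_D(r)$ over all runs $r$ (equivalently the walks $w$ of $D$ with $\mathrm{lbl}(w)\cap L(\mathcal{A})\neq\emptyset$, where $\mathrm{lbl}(w)=\{u_0\cdots u_{k-1}:u_i\in\mathrm{lbl}(e_i)\}$).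 Simple-run semantics: $\llbracket\mathcal{A}\rrbracket_{SR}(D)$ is the bag of $\pi_D(r)$ over all simple runs $r$. *)

(* Defs.v *)
From mathcomp Require Import all_boot.
Set Implicit Arguments. Unset Strict Implicit. Unset Printing Implicit Defensive.

Record database (Sigma : finType) := Database {
  dV : finType; dE : finType;
  dsrc : dE -> dV; dtgt : dE -> dV;
  dlbl : dE -> {set Sigma} }.

Record automaton (Sigma : finType) := Automaton {
  aQ : finType;
  aDelta : {set aQ * Sigma * aQ};
  aI : {set aQ}; aF : {set aQ} }.

(* A walk (n0, e0, ..., e_{k-1}, n_k) is represented by n0 and the edge list;
   the vertices n_{i+1} are tgt(e_i). *)
Record walk (V E : Type) := Walk { wstart : V; wedges : seq E }.

Section Walks.
Variables (Sigma : finType) (D : database Sigma).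

Fixpoint walk_ok (n : dV D) (es : seq (dE D)) : bool :=
  if es is e :: es' then (dsrc e == n) && walk_ok (dtgt e) es' else true.

Definition is_walk (w : walk (dV D) (dE D)) := walk_ok (wstart w) (wedges w).
Definition wvertices (w : walk (dV D) (dE D)) : seq (dV D) :=
  wstart w :: map (@dtgt _ D) (wedges w).
Definition wsrc (w : walk (dV D) (dE D)) := wstart w.
Definition wtgt (w : walk (dV D) (dE D)) := last (wstart w) (map (@dtgt _ D) (wedges w)).
Definition wlength (w : walk (dV D) (dE D)) := size (wedges w).
Definition is_simple (w : walk (dV D) (dE D)) := is_walk w && uniq (wvertices w).
End Walks.

Section Runs.
Variables (Sigma : finType) (D : database Sigma) (A : automaton Sigma).

Definition run_edge_ok (x : dE D * (aQ A * Sigma * aQ A)) : bool :=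
  (x.2 \in aDelta A) && (x.2.1.2 \in dlbl x.1).

Definition run_E : finType := {x : dE D * (aQ A * Sigma * aQ A) | run_edge_ok x}.

Definition runDB : database Sigma :=
  @Database Sigma (dV D * aQ A)%type run_E
    (fun x => (dsrc (val x).1, (val x).2.1.1))
    (fun x => (dtgt (val x).1, (val x).2.2))
    (fun x => [set (val x).2.1.2]).

Definition is_run (r : walk (dV runDB) (dE runDB)) :=
  [/\ is_walk r, (wsrc r).2 \in aI A & (wtgt r).2 \in aF A].

Definition proj_D (r : walk (dV runDB) (dE runDB)) : walk (dV D) (dE D) :=
  Walk (wstart r).1 (map (fun x : run_E => (val x).1) (wedges r)).

(* Support of the bag [[A]]_W(D) *)
Definition in_walk_sem (w : walk (dV D) (dE D)) :=
  exists r, is_run r /\ proj_D r = w.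
(* Support of the bag [[A]]_SR(D) *)
Definition in_simple_run_sem (w : walk (dV D) (dE D)) :=
  exists r, is_run r /\ is_simple r /\ proj_D r = w.

Definition P_st (s t : dV D) (w : walk (dV D) (dE D)) :=
  in_walk_sem w /\ wsrc w = s /\ wtgt w = t.
End Runs.

(* Main.v *)
Require Import Defs.
From mathcomp Require Import all_boot.
From mathcomp Require Import zify.

Section Aux.
Variables (Sigma : finType) (D : database Sigma).

Lemma walk_ok_cat (n : dV D) (a b : seq (dE D)) :
  walk_ok n (a ++ b) = walk_ok n a && walk_ok (last n (map (@dtgt _ D) a)) b.
Proof.
elim: a n => [|e a IH] n //=. by rewrite IH andbA.
Qed.

Lemma nth_vtx (x0 n0 : dV D) (es : seq (dE D)) k : k <= size es ->
  nth x0 (n0 :: map (@dtgt _ D) es) k = last n0 (map (@dtgt _ D) (take k es)).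
Proof.
elim: es n0 k => [|e es IH] n0 [|k] //= Hk.
by rewrite IH.
Qed.

Lemma cut_walk (w : walk (dV D) (dE D)) : is_walk w -> ~~ uniq (wvertices w) ->
  exists i j, [/\ i < j <= size (wedges w),
     is_walk (Walk (wstart w) (take i (wedges w) ++ drop j (wedges w))) &
     wtgt (Walk (wstart w) (take i (wedges w) ++ drop j (wedges w))) = wtgt w].
Proof.
case: w => n0 es Hw Hu.
have [i [j [Hij Hj Heq]]] := uniqPn n0 Hu.
move: Hw Hj Heq; rewrite /is_walk /wvertices /wtgt /= => Hw Hj Heq.
rewrite /= size_map ltnS in Hj.
have Hi : i <= size es by apply: leq_trans (ltnW Hij) Hj.
rewrite !nth_vtx // in Heq.
exists i, j; split; first by rewrite Hij Hj.
- have Hwi := Hw; rewrite -(cat_take_drop i es) walk_ok_cat in Hwi.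
  have Hwj := Hw; rewrite -(cat_take_drop j es) walk_ok_cat in Hwj.
  case/andP: Hwi => H1 _; case/andP: Hwj => _ H.
  rewrite /is_walk /= walk_ok_cat H1 /=.
  have -> : last n0 [seq dtgt i | i <- take i es] = last n0 [seq dtgt i | i <- take j es] by [].
  exact H.
- rewrite /wtgt /= map_cat last_cat Heq -last_cat -map_cat cat_take_drop //.
Qed.
End Aux.

Lemma wtgt_proj (Sigma : finType) (D : database Sigma) (A : automaton Sigma)
  (r : walk (dV (runDB D A)) (dE (runDB D A))) :
  wtgt (proj_D r) = (wtgt r).1.
Proof.
rewrite /wtgt /proj_D /= -map_comp -(last_map (fun p : dV (runDB D A) => p.1)) -map_comp.
by [].
Qed.

Theorem proposition19 (Sigma : finType) (D : database Sigma) (A : automaton Sigma)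
  (s t : dV D) (w : walk (dV D) (dE D)) :
  P_st A s t w ->
  (forall w', P_st A s t w' -> wlength w <= wlength w') ->
  in_simple_run_sem A w.
Proof.
move=> [[r [[Hw HI HF] Hp]] [Hs Ht]] Hmin.
exists r; split; first by [].
split; last by [].
rewrite /is_simple Hw andTb.
apply/negPn/negP => Hu.
have [i [j [/andP [Hij Hj] Hw' Ht']]] := @cut_walk _ _ r Hw Hu.
set r' := Walk _ _ in Hw' Ht'.
have Hrun : is_run r' by split; rewrite ?Ht'.
have HP : P_st A s t (proj_D r').
  split; first by exists r'.
  split; first by rewrite -Hs -Hp.
  by rewrite wtgt_proj Ht' -wtgt_proj Hp.
have := Hmin _ HP.
rewrite -Hp /wlength /= !size_map size_cat size_take size_drop.
have Hi : i < size (wedges r) by apply: leq_trans Hij Hj.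
rewrite Hi.
move=> H.
have Hjs : j <= size (wedges r) by [].
move: H Hij Hjs; clear; move: (size _) => n H1 H2 H3.
have E : n = j + (n - j) by rewrite subnKC.
move: (n - j) E H1 => m E H1. subst n.
by rewrite leq_add2r leqNgt H2 in H1.
Qed.
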